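(* Let $\Gamma\subset(\mathbb{RP}^1)^m$ be a realisable real EPBQ-curve, and let $a_{jl},b_{jl},e_{jl}$ be the coefficients of its defining relations. Then for any $j\ne l$, $$(1-a_{jl}e_{jl}-b_{jl}b_{lj})^2-4a_{jl}b_{jl}b_{lj}e_{jl}>0.$$
   Context: A real EPBQ-curve is an irreducible real algebraic curve $\Gamma\subset(\mathbb{RP}^1)^m$ (coordinates $z_1,\dots,z_m$) such that (i) for each $j\ne l$, $a_{jl}z_j^2z_l^2+b_{jl}z_j^2-2z_jz_l+b_{lj}z_l^2+e_{jl}=0$ on $\Gamma$ with real coefficients; (ii) no $z_j$ is identically $0$ or $\infty$ on $\Gamma$; (iii) for $j\ne l$, $z_j,z_l$ are neither directly nor inversely proportional on $\Gamma$. The coefficients are uniquely determined, with $a_{jl}=a_{lj}$, $e_{jl}=e_{lj}$. $\Gamma$ is realisable if there exist $n\ge3$, a decomposition $[n]=I_1\sqcup\dots\sqcup I_m$ into nonempty sets ($p\in I_{j(p)}$), nonzero reals $\lambda_1,\dots,\lambda_n$ with $\lambda_p\ne\pm\lambda_q$ whenever $p\ne q$, $j(p)=j(q)$, and reals $g_{pq}=g_{qp}$ for $p\ne q$, $j(p)=j(q)$, such that the matrices $G=(g_{pq})$, $H=(h_{pq})$ defined by $g_{pp}=h_{pp}=1$; $h_{pq}=\frac{2\lambda_p(\lambda_pg_{pq}-\lambda_q)}{\lambda_p^2-\lambda_q^2}$ if $p\ne q$, $j(p)=j(q)$; and, if $j(p)\ne j(q)$, $g_{pq}=\frac12\left(-\frac{a_{j(p)j(q)}}{\lambda_p\lambda_q}+\frac{\lambda_qb_{j(p)j(q)}}{\lambda_p}+\frac{\lambda_pb_{j(q)j(p)}}{\lambda_q}-\lambda_p\lambda_qe_{j(p)j(q)}\right)$,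 $h_{pq}=\frac{\lambda_pb_{j(q)j(p)}}{\lambda_q}-\lambda_p\lambda_qe_{j(p)j(q)}$, satisfy one of: (S) $G$ positive definite; (E) $G$ degenerate positive semidefinite with all principal minors of sizes $2,\dots,n-1$ strictly positive and no row of $H$ a linear combination of rows of $G$; (L) $G$ non-degenerate with negative index of inertia $1$, all principal minors of sizes $2,\dots,n-1$ strictly positive, and $\sum_{q,r}g^{qr}h_{pq}h_{pr}<0$ for all $p$, where $(g^{qr})=G^{-1}$. *)

(* Defs.v *)
From HB Require Import structures.
From mathcomp Require Import all_boot all_order all_algebra.
From mathcomp Require Import reals.
From mathcomp Require Import mpoly.

Set Implicit Arguments.
Unset Strict Implicit.
Unset Printing Implicit Defensive.

Import Order.TTheory GRing.Theory Num.Theory.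
Local Open Scope ring_scope.

Section EPBQ.
Variable R : realType.

(* A point of RP^1 is [Some x] (= x = [x:1]) or [None] (= infinity = [1:0]). *)
Definition RP1 := option R.

Definition hX (o : RP1) : R := if o is Some x then x else 1.
Definition hY (o : RP1) : R := if o is Some _ then 1 else 0.

Definition pt (m : nat) := {ffun 'I_m -> RP1}.

Definition ptset (m : nat) := pt m -> Prop.

Definition coords (m : nat) (P : pt m) : 'I_(m + m) -> R :=
  fun i => match split i with inl j => hX (P j) | inr j => hY (P j) end.

(* a polynomial in X_1..X_m (indices lshift) and Y_1..Y_m (indices rshift)
   which is multihomogeneous: homogeneous of some degree d_j in (X_j, Y_j)
   for every j; its vanishing at a point of (RP^1)^m is well defined *)
Definition multihomogeneous (m : nat) (p : {mpoly R[m + m]}) : Prop :=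
  exists d : 'I_m -> nat, forall mo, mo \in msupp p ->
    forall j : 'I_m, (mo (lshift m j) + mo (rshift m j))%N = d j.

Definition algebraic (m : nat) (A : ptset m) : Prop :=
  exists ps : seq {mpoly R[m + m]},
    (forall p, p \in ps -> multihomogeneous p) /\
    (forall P, A P <-> (forall p, p \in ps -> p.@[coords P] = 0)).

Definition subset_of (m : nat) (A B : ptset m) : Prop := forall P, A P -> B P.

Definition proper_in (m : nat) (A B : ptset m) : Prop :=
  subset_of A B /\ exists P, B P /\ ~ A P.

Definition finite_set (m : nat) (A : ptset m) : Prop :=
  exists s : seq (pt m), forall P, A P -> P \in s.

Definition irreducible_alg (m : nat) (G : ptset m) : Prop :=
  [/\ algebraic G, exists P, G P &
     ~ (exists A B : ptset m, [/\ algebraic A, algebraic B, proper_in A G,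
          proper_in B G & forall P, G P -> A P \/ B P])].

(* irreducible real algebraic curve: an irreducible real algebraic set of
   dimension 1, i.e. infinite and all of whose proper algebraic subsets
   (which have smaller dimension) are finite (dimension 0) *)
Definition irreducible_real_curve (m : nat) (G : ptset m) : Prop :=
  [/\ irreducible_alg G, ~ finite_set G &
     forall A : ptset m, algebraic A -> proper_in A G -> finite_set A].

(* the relation  a z_j^2 z_l^2 + b_jl z_j^2 - 2 z_j z_l + b_lj z_l^2 + e = 0,
   written in homogeneous coordinates z_j = X_j/Y_j (so that it makes sense
   at infinity) *)
Definition biquad_rel (m : nat) (a b e : 'I_m -> 'I_m -> R) (j l : 'I_m)
    (P : pt m) : Prop :=
  let Xj := hX (P j) in let Yj := hY (P j) in
  let Xl := hX (P l) in let Yl := hY (P l) in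
  a j l * Xj ^+ 2 * Xl ^+ 2 + b j l * Xj ^+ 2 * Yl ^+ 2
  - 2 * Xj * Yj * Xl * Yl + b l j * Yj ^+ 2 * Xl ^+ 2
  + e j l * Yj ^+ 2 * Yl ^+ 2 = 0.

Definition real_EPBQ_curve (m : nat) (G : ptset m)
    (a b e : 'I_m -> 'I_m -> R) : Prop :=
  [/\ irreducible_real_curve G,
      (forall j l : 'I_m, j != l -> forall P, G P -> biquad_rel a b e j l P),
      (forall j : 'I_m, (exists P, G P /\ P j != Some 0) /\
                        (exists P, G P /\ P j != None)) &
      (* (iii) z_j, z_l neither directly (z_j = c z_l) nor inversely
         (z_j z_l = c) proportional, c a nonzero real constant *)
      (forall j l : 'I_m, j != l ->
         ~ (exists c : R, c != 0 /\ forall P, G P ->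
              hX (P j) * hY (P l) = c * hY (P j) * hX (P l)) /\
         ~ (exists c : R, c != 0 /\ forall P, G P ->
              hX (P j) * hX (P l) = c * hY (P j) * hY (P l)))].

Definition quad_form (n : nat) (G : 'M[R]_n) (x : 'cV[R]_n) : R :=
  (x^T *m G *m x) 0 0.

Definition pos_def (n : nat) (G : 'M[R]_n) : Prop :=
  forall x : 'cV[R]_n, x != 0 -> 0 < quad_form G x.

Definition pos_semidef (n : nat) (G : 'M[R]_n) : Prop :=
  forall x : 'cV[R]_n, 0 <= quad_form G x.

Definition principal_minor (n : nat) (G : 'M[R]_n) (S : {set 'I_n}) : R :=
  \det (\matrix_(i < #|S|, k < #|S|) G (enum_val i) (enum_val k)).

Definition minors_2_to_nm1_pos (n : nat) (G : 'M[R]_n) : Prop :=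
  forall S : {set 'I_n}, (2 <= #|S| <= n.-1)%N -> 0 < principal_minor G S.

Definition neg_def_on (n k : nat) (G : 'M[R]_n) (U : 'M[R]_(k, n)) : Prop :=
  forall x : 'rV[R]_k, x != 0 -> quad_form G (x *m U)^T < 0.

Definition neg_index (n : nat) (G : 'M[R]_n) (k : nat) : Prop :=
  (exists U : 'M[R]_(k, n), \rank U = k /\ neg_def_on G U) /\
  (forall U : 'M[R]_(k.+1, n), ~ neg_def_on G U).

Definition Gmat (m n : nat) (a b e : 'I_m -> 'I_m -> R) (J : 'I_n -> 'I_m)
    (lam : 'I_n -> R) (g : 'I_n -> 'I_n -> R) : 'M[R]_n :=
  \matrix_(p, q)
    if p == q then 1
    else if J p == J q then g p q
    else 2^-1 * (- a (J p) (J q) / (lam p * lam q)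
                 + lam q * b (J p) (J q) / lam p
                 + lam p * b (J q) (J p) / lam q
                 - lam p * lam q * e (J p) (J q)).

Definition Hmat (m n : nat) (a b e : 'I_m -> 'I_m -> R) (J : 'I_n -> 'I_m)
    (lam : 'I_n -> R) (g : 'I_n -> 'I_n -> R) : 'M[R]_n :=
  \matrix_(p, q)
    if p == q then 1
    else if J p == J q then
      2 * lam p * (lam p * g p q - lam q) / (lam p ^+ 2 - lam q ^+ 2)
    else lam p * b (J q) (J p) / lam q - lam p * lam q * e (J p) (J q).

(* The decomposition
   [n] = I_1 u ... u I_m into nonempty sets is encoded by the surjection
   J : [n] -> [m], p |-> j(p); the values g p q matter only when p != q and
   J p = J q. *)
Definition realisable (m : nat) (a b e : 'I_m -> 'I_m -> R) : Prop :=
  exists (n : nat) (J : 'I_n -> 'I_m) (lam : 'I_n -> R) (g : 'I_n -> 'I_n -> R),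
    [/\ (3 <= n)%N /\ (forall j : 'I_m, exists p : 'I_n, J p = j),
        (forall p, lam p != 0),
        (forall p q, p != q -> J p = J q -> lam p != lam q /\ lam p != - lam q),
        (forall p q, p != q -> J p = J q -> g p q = g q p) &
    let G := Gmat a b e J lam g in
    let H := Hmat a b e J lam g in
    [\/ pos_def G,
        [/\ \det G = 0, pos_semidef G, minors_2_to_nm1_pos G &
                      forall p, ~~ (row p H <= G)%MS]
      | [/\ \det G != 0, neg_index G 1, minors_2_to_nm1_pos G &
                      forall p, \sum_q \sum_r invmx G q r * H p q * H p r < 0]]].

End EPBQ.

(* Main.v *)
Require Import Defs.
From HB Require Import structures.
From mathcomp Require Import all_boot all_order all_algebra.
From mathcomp Require Import reals.
From mathcomp Require Import mpoly.
From mathcomp Require Import ring lra.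
From mathcomp Require boolp.
Import Order.TTheory GRing.Theory Num.Theory.
Local Open Scope ring_scope.

Section Aux.
Variable R : realType.
Variable m : nat.

Definition quadp (j l : 'I_m) (c1 c2 : R) : {mpoly R[m + m]} :=
  c1 *: 'X_[U_(lshift m j) + U_(lshift m l)]
  + c2 *: 'X_[U_(rshift m j) + U_(rshift m l)].

Lemma coords_l (P : pt R m) j : coords P (lshift m j) = hX (P j).
Proof. by rewrite /coords (unsplitK (inl j)). Qed.
Lemma coords_r (P : pt R m) j : coords P (rshift m j) = hY (P j).
Proof. by rewrite /coords (unsplitK (inr j)). Qed.

Lemma quadp_eval j l c1 c2 (P : pt R m) :
  (quadp j l c1 c2).@[coords P] =
  c1 * (hX (P j) * hX (P l)) + c2 * (hY (P j) * hY (P l)).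
Proof.
rewrite /quadp mevalD !mevalZ !mpolyXD !mevalM.
by rewrite !mevalXU !coords_l !coords_r.
Qed.

Lemma quadp_mh j l c1 c2 : multihomogeneous (quadp j l c1 c2).
Proof.
exists (fun k => ((j == k) + (l == k))%N) => mo /msuppD_le.
rewrite mem_cat => /orP[] /msuppZ_le /mem_msuppXP <- k;
  rewrite !mnmDE !mnm1E ?eq_lshift ?eq_rshift ?eq_lrshift ?eq_rlshift /=;
  by rewrite ?addn0 ?add0n.
Qed.

Lemma union_split (G : ptset R m) (f1 f2 : {mpoly R[m + m]}) :
  irreducible_alg G -> multihomogeneous f1 -> multihomogeneous f2 ->
  (forall P, G P -> f1.@[coords P] = 0 \/ f2.@[coords P] = 0) ->
  (forall P, G P -> f1.@[coords P] = 0) \/ (forall P, G P -> f2.@[coords P] = 0).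
Proof.
case=> [[ps [hps hG]] _ hirr] h1 h2 hU.
have alg : forall f, multihomogeneous f ->
    algebraic (fun P => G P /\ f.@[coords P] = 0).
  move=> f hf; exists (f :: ps); split.
    by move=> p; rewrite inE => /orP[/eqP->|/hps].
  move=> P; split.
    move=> [/hG hP hf0] p; rewrite inE => /orP[/eqP->//|]; exact: hP.
  move=> hP; split; last by apply: hP; rewrite inE eqxx.
  by apply/hG => p hp; apply: hP; rewrite inE hp orbT.
case: (boolp.pselect (forall P, G P -> f1.@[coords P] = 0)) => [c1|n1]; first by left.
case: (boolp.pselect (forall P, G P -> f2.@[coords P] = 0)) => [c2|n2]; first by right.
exfalso; apply: hirr.
exists (fun P => G P /\ f1.@[coords P] = 0), (fun P => G P /\ f2.@[coords P] = 0).
split; [exact: alg|exact: alg| | |by move=> P GP; case: (hU P GP); [left|right]].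
- split; first by move=> P [].
  have [P hP] : exists P, ~ (G P -> _) := (proj2 (boolp.existsNP _)) n1.
  have GP : G P by apply: boolp.contrapT => nG; apply: hP => /nG.
  by exists P; split => // -[_ h]; apply: hP.
- split; first by move=> P [].
  have [P hP] : exists P, ~ (G P -> _) := (proj2 (boolp.existsNP _)) n2.
  have GP : G P by apply: boolp.contrapT => nG; apply: hP => /nG.
  by exists P; split => // -[_ h]; apply: hP.
Qed.

Lemma det22 (A : 'M[R]_2) : \det A = A 0 0 * A 1 1 - A 0 1 * A 1 0.
Proof.
rewrite (expand_det_row _ 0) !big_ord_recr big_ord0 /= /cofactor !det_mx11 !mxE /=.
rewrite add0r expr0 expr1 !mul1r mulN1r.
have -> : widen_ord (leqnSn 1) ord_max = 0 :> 'I_2 by apply/val_inj.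
have -> : lift (0 : 'I_2) (0 : 'I_1) = 1 :> 'I_2 by apply/val_inj.
have -> : ord_max = 1 :> 'I_2 by apply/val_inj.
have -> : lift (1 : 'I_2) (0 : 'I_1) = 0 :> 'I_2 by apply/val_inj.
by rewrite mulrN.
Qed.

Lemma quad2 n (G : 'M[R]_n) (p q : 'I_n) (c : R) : p != q ->
  quad_form G (\col_i (if i == p then 1 else if i == q then c else 0)) =
  G p p + c * (G p q + G q p) + c ^+ 2 * G q q.
Proof.
move=> pq.
have hs : forall F : 'I_n -> R, \sum_i (if i == p then 1 else if i == q then c else 0) * F i
   = F p + c * F q.
  move=> F; rewrite (bigD1 p) //= eqxx (bigD1 q) //=; last by rewrite eq_sym.
  rewrite eq_sym (negbTE pq) eqxx big1 ?addr0 ?mul1r //.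
  by move=> i /andP[/negbTE -> /negbTE ->]; rewrite mul0r.
rewrite /quad_form !mxE.
rewrite (eq_bigr (fun k => (if k == p then 1 else if k == q then c else 0) * (G p k + c * G q k))).
  by rewrite hs; ring.
move=> k _; rewrite mulrC; congr (_ * _); first by rewrite mxE.
rewrite mxE; have := hs (fun j => G j k) => /= <-; apply: eq_bigr => j _.
by rewrite !mxE.
Qed.

Lemma minor2 n (G : 'M[R]_n) (p q : 'I_n) : (3 <= n)%N -> p != q ->
  G p p = 1 -> G q q = 1 -> minors_2_to_nm1_pos G -> 0 < 1 - G p q * G q p.
Proof.
move=> n3 pq hp hq hm.
have cS : #|[set p; q]| = 2%N by rewrite cards2 pq.
have n2 : (2 <= n.-1)%N by move: n3; case: (n) => [|[|[|k]]].
have := hm [set p; q]; rewrite cS n2 => /(_ isT); rewrite /principal_minor.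
have gen : forall (k : nat) (f : 'I_k -> 'I_n), k = 2%N -> injective f ->
   (forall i, f i \in [set p; q]) ->
   0 < \det (\matrix_(i < k, k' < k) G (f i) (f k')) -> 0 < 1 - G p q * G q p.
  move=> k f hk; subst k => finj fin.
  rewrite det22 !mxE.
  have f01 : f 0 != f 1 by apply/eqP => /finj.
  have := fin 0; have := fin 1; rewrite !inE.
  move=> /orP[]/eqP e1 /orP[]/eqP e0; move: f01; rewrite e0 e1 ?eqxx //= => _.
  - by rewrite hp hq mul1r ?(mulrC (G q p)).
  - by rewrite hp hq mul1r ?(mulrC (G q p)).
apply: gen => //; first exact: enum_val_inj.
move=> i; exact: enum_valP.
Qed.

Lemma mat_part (a b e : 'I_m -> 'I_m -> R) (j l : 'I_m) : j != l ->
  a j l = a l j -> e j l = e l j -> realisable a b e ->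
  exists x y : R, [/\ x != 0, y != 0 &
    (- a j l + y ^+ 2 * b j l + x ^+ 2 * b l j - x ^+ 2 * y ^+ 2 * e j l) ^+ 2
      < 4 * x ^+ 2 * y ^+ 2].
Proof.
move=> jl ea ee [n [J [lam [g [[n3 surj] l0 _ _ hc]]]]].
have [p hp] := surj j; have [q hq] := surj l.
have pq : p != q by apply: contraNneq jl => epq; rewrite -hp -hq epq.
move: hc; set G := Gmat a b e J lam g => hc.
have Gpp : forall r, G r r = 1 by move=> r; rewrite /G /Gmat mxE eqxx.
have Gpq : G p q = 2^-1 * (- a j l / (lam p * lam q) + lam q * b j l / lam p
                 + lam p * b l j / lam q - lam p * lam q * e j l).
  by rewrite /G /Gmat mxE (negbTE pq) hp hq (negbTE jl).
have Gqp : G q p = G p q.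
  rewrite Gpq /G /Gmat mxE eq_sym (negbTE pq) hp hq eq_sym (negbTE jl) -ea -ee.
  by rewrite (mulrC (lam q) (lam p)); congr (_ * _); ring.
have key : 0 < 1 - G p q ^+ 2.
  case: hc => [hS | [_ _ hm _] | [_ _ hm _]].
  - have nz : (\col_i (if i == p then 1 else if i == q then - G p q else 0)) != 0 :> 'cV[R]_n.
      apply/eqP => h; have := congr1 (fun M : 'cV[R]_n => M p 0) h.
      by rewrite !mxE eqxx => /eqP; rewrite oner_eq0.
    have := hS _ nz; rewrite quad2 // !Gpp Gqp.
    by congr (0 < _); ring.
  - by have := @minor2 _ G p q n3 pq (Gpp p) (Gpp q) hm; rewrite Gqp expr2.
  - by have := @minor2 _ G p q n3 pq (Gpp p) (Gpp q) hm; rewrite Gqp expr2.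
exists (lam p), (lam q); split; [exact: l0|exact: l0|].
have hx := l0 p; have hy := l0 q.
have -> : (- a j l + lam q ^+ 2 * b j l + lam p ^+ 2 * b l j
     - lam p ^+ 2 * lam q ^+ 2 * e j l) = 2 * lam p * lam q * G p q.
  by rewrite Gpq; field; rewrite hx hy.
have hxy : 0 < lam p ^+ 2 * lam q ^+ 2.
  by rewrite mulr_gt0 // exprn_even_gt0.
nra.
Qed.

Definition Frel (a b b' e Xj Yj Xl Yl : R) :=
  a * Xj ^+ 2 * Xl ^+ 2 + b * Xj ^+ 2 * Yl ^+ 2
  - 2 * Xj * Yj * Xl * Yl + b' * Yj ^+ 2 * Xl ^+ 2
  + e * Yj ^+ 2 * Yl ^+ 2.

Lemma alg1 (a b b' e Xj Yj Xl Yl : R) :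
  Frel a b b' e Xj Yj Xl Yl = 0 ->
  - (a * b) < 0 ->
  (1 - a * e - b * b') ^+ 2 - 4 * (- (a * b)) * (- (b' * e)) <= 0 ->
  (a * Xj ^+ 2 + b' * Yj ^+ 2) * Xl - Xj * Yj * Yl = 0 /\
  (2 * (- (a * b)) * (Xj * Xj) + (1 - a * e - b * b') * (Yj * Yj)) * Yl = 0.
Proof.
rewrite /Frel => hF hal hD.
set al := - (a * b) in hal hD *; set be := 1 - a * e - b * b' in hD *.
set D := be ^+ 2 - 4 * al * (- (b' * e)) in hD.
set T1 := (a * Xj ^+ 2 + b' * Yj ^+ 2) * Xl - Xj * Yj * Yl.
set S := 2 * al * (Xj * Xj) + be * (Yj * Yj).
have id : 4 * al * T1 ^+ 2 - (S ^+ 2 - D * Yj ^+ 4) * Yl ^+ 2 =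
   4 * al * (a * Xj ^+ 2 + b' * Yj ^+ 2) * (a * Xj ^+ 2 * Xl ^+ 2 + b * Xj ^+ 2 * Yl ^+ 2
  - 2 * Xj * Yj * Xl * Yl + b' * Yj ^+ 2 * Xl ^+ 2 + e * Yj ^+ 2 * Yl ^+ 2).
  rewrite /T1 /S /D /al /be; ring.
rewrite hF mulr0 in id.
have h1 : 4 * al * T1 ^+ 2 <= 0.
  have := sqr_ge0 T1; nra.
have h2 : 0 <= (- D) * Yj ^+ 4 * Yl ^+ 2.
  have y4 : 0 <= Yj ^+ 4 by rewrite exprn_even_ge0.
  have y2 : 0 <= Yl ^+ 2 by rewrite exprn_even_ge0.
  rewrite mulr_ge0 // mulr_ge0 // oppr_ge0 //.
have h3 : 0 <= (S * Yl) ^+ 2 by exact: sqr_ge0.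
have h4 : (S * Yl) ^+ 2 = 0 by nra.
have h5 : al * T1 ^+ 2 = 0 by nra.
split.
  move: h5 => /eqP; rewrite mulf_eq0 (negbTE (ltr0_neq0 hal)) /= => /eqP.
  by move/eqP; rewrite sqrf_eq0 => /eqP.
by move/eqP: h4; rewrite sqrf_eq0 => /eqP.
Qed.

Lemma alg2 (a b b' e Xj Yj Xl Yl : R) :
  Frel a b b' e Xj Yj Xl Yl = 0 ->
  - (a * b) = 0 -> 1 - a * e - b * b' = 0 -> - (b' * e) < 0 ->
  Yj * Yl = 0.
Proof.
rewrite /Frel => hF hal hbe hga.
set T1 := (a * Xj ^+ 2 + b' * Yj ^+ 2) * Xl - Xj * Yj * Yl.
have id : T1 ^+ 2 - ((- (a * b)) * Xj ^+ 4 + (1 - a * e - b * b') * Xj ^+ 2 * Yj ^+ 2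
     + (- (b' * e)) * Yj ^+ 4) * Yl ^+ 2 =
   (a * Xj ^+ 2 + b' * Yj ^+ 2) * (a * Xj ^+ 2 * Xl ^+ 2 + b * Xj ^+ 2 * Yl ^+ 2
  - 2 * Xj * Yj * Xl * Yl + b' * Yj ^+ 2 * Xl ^+ 2 + e * Yj ^+ 2 * Yl ^+ 2).
  rewrite /T1; ring.
rewrite hF mulr0 hal hbe !mul0r !add0r in id.
have h0 : (Yj ^+ 2 * Yl) ^+ 2 = 0.
  have := sqr_ge0 T1; have := sqr_ge0 (Yj ^+ 2 * Yl).
  have -> : (Yj ^+ 2 * Yl) ^+ 2 = Yj ^+ 4 * Yl ^+ 2 by ring.
  nra.
move/eqP: h0; rewrite sqrf_eq0 mulf_eq0 expf_eq0 /= => /orP[/eqP->|/eqP->];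
  by rewrite ?mul0r ?mulr0.
Qed.

Lemma sqz (x : R) : x * x = 0 -> x = 0.
Proof. by move/eqP; rewrite mulf_eq0 orbb => /eqP. Qed.

Lemma Ysplit (G : ptset R m) j l : irreducible_alg G ->
  (forall P, G P -> hY (P j) = 0 \/ hY (P l) = 0) ->
  (forall P, G P -> hY (P j) = 0) \/ (forall P, G P -> hY (P l) = 0).
Proof.
move=> irr h.
have := @union_split G _ _ irr (quadp_mh j j 0 1) (quadp_mh l l 0 1).
case.
- move=> P GP; rewrite !quadp_eval !mul0r !add0r !mul1r.
  by case: (h P GP) => ->; [left|right]; rewrite mul0r.
- by move=> H; left => P GP; have := H P GP; rewrite quadp_eval mul0r add0r mul1r => /sqz.
- by move=> H; right => P GP; have := H P GP; rewrite quadp_eval mul0r add0r mul1r => /sqz.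
Qed.

Lemma Xsplit (G : ptset R m) j l : irreducible_alg G ->
  (forall P, G P -> hX (P j) = 0 \/ hX (P l) = 0) ->
  (forall P, G P -> hX (P j) = 0) \/ (forall P, G P -> hX (P l) = 0).
Proof.
move=> irr h.
have := @union_split G _ _ irr (quadp_mh j j 1 0) (quadp_mh l l 1 0).
case.
- move=> P GP; rewrite !quadp_eval !mul0r !addr0 !mul1r.
  by case: (h P GP) => ->; [left|right]; rewrite mul0r.
- by move=> H; left => P GP; have := H P GP; rewrite quadp_eval mul0r addr0 mul1r => /sqz.
- by move=> H; right => P GP; have := H P GP; rewrite quadp_eval mul0r addr0 mul1r => /sqz.
Qed.

Lemma noY (G : ptset R m) a b e j : real_EPBQ_curve G a b e ->
  ~ (forall P, G P -> hY (P j) = 0).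
Proof.
case=> _ _ ii _ H; have [_ [P [GP nP]]] := ii j.
move: (H P GP) nP; case: (P j) => //= x.
by move/eqP; rewrite oner_eq0.
Qed.

Lemma noX (G : ptset R m) a b e j : real_EPBQ_curve G a b e ->
  ~ (forall P, G P -> hX (P j) = 0).
Proof.
case=> _ _ ii _ H; have [[P [GP nP]] _] := ii j.
move: (H P GP) nP; case: (P j) => [x|] /=; first by move=> ->; rewrite eqxx.
by move/eqP; rewrite oner_eq0.
Qed.

Lemma sym_ae (G : ptset R m) a b e j l : real_EPBQ_curve G a b e -> j != l ->
  a j l = a l j /\ e j l = e l j.
Proof.
move=> hC jl; have hC' := hC; case: hC' => [[irr _ _] rel ii iii].
set da := a j l - a l j; set de := e j l - e l j.
have key : forall P, G P -> da * (hX (P j) * hX (P l)) ^+ 2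
    + de * (hY (P j) * hY (P l)) ^+ 2 = 0.
  move=> P GP; have := rel j l jl P GP; have lj : l != j by rewrite eq_sym.
  have := rel l j lj P GP; rewrite /biquad_rel /= => h2 h1.
  rewrite /da /de; lra.
suff : da = 0 /\ de = 0.
  by case=> /eqP; rewrite subr_eq0 => /eqP -> /eqP; rewrite subr_eq0 => /eqP ->.
have YY : ~ (forall P, G P -> hY (P j) * hY (P l) = 0).
  move=> H; have := @Ysplit G j l irr.
  case.
  - by move=> P GP; have /eqP := H P GP; rewrite mulf_eq0 => /orP[/eqP|/eqP]; [left|right].
  - exact: (@noY G a b e j hC).
  - exact: (@noY G a b e l hC).
have XX : ~ (forall P, G P -> hX (P j) * hX (P l) = 0).
  move=> H; have := @Xsplit G j l irr.
  case.
  - by move=> P GP; have /eqP := H P GP; rewrite mulf_eq0 => /orP[/eqP|/eqP]; [left|right].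
  - exact: (@noX G a b e j hC).
  - exact: (@noX G a b e l hC).
have [da0|da0] := eqVneq da 0; have [de0|de0] := eqVneq de 0.
- by [].
- exfalso; apply: YY => P GP; have := key P GP; rewrite da0 mul0r add0r => /eqP.
  by rewrite mulf_eq0 (negbTE de0) /= sqrf_eq0 => /eqP.
- exfalso; apply: XX => P GP; have := key P GP; rewrite de0 mul0r addr0 => /eqP.
  by rewrite mulf_eq0 (negbTE da0) /= sqrf_eq0 => /eqP.
exfalso.
set c := - de / da.
have keyc : forall P, G P -> (hX (P j) * hX (P l)) ^+ 2 = c * (hY (P j) * hY (P l)) ^+ 2.
  move=> P GP; have := key P GP; rewrite /c => h.
  apply/eqP; rewrite -subr_eq0.
  set X := (hX (P j) * hX (P l)) ^+ 2; set Y := (hY (P j) * hY (P l)) ^+ 2.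
  have -> : X - - de / da * Y = (da * X + de * Y) / da by field.
  by rewrite h mul0r.
have [cpos|cneg] := ltrP 0 c.
- set r := Num.sqrt c.
  have r2 : r ^+ 2 = c by rewrite sqr_sqrtr // ltW.
  have r0 : r != 0 by rewrite sqrtr_eq0 -ltNge.
  have := @union_split G _ _ irr (quadp_mh j l 1 (- r)) (quadp_mh j l 1 r).
  case.
  + move=> P GP; rewrite !quadp_eval !mul1r.
    have := keyc P GP; rewrite -r2 => h.
    have : (hX (P j) * hX (P l) + - r * (hY (P j) * hY (P l))) *
           (hX (P j) * hX (P l) + r * (hY (P j) * hY (P l))) = 0.
      set A := hX (P j) * hX (P l) in h *; set B := hY (P j) * hY (P l) in h *.
      have -> : (A + - r * B) * (A + r * B) = A ^+ 2 - r ^+ 2 * B ^+ 2 by ring.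
      by rewrite h subrr.
    by move/eqP; rewrite mulf_eq0 => /orP[/eqP ->|/eqP ->]; [left|right].
  + move=> H; apply: (proj2 (iii j l jl)); exists (r); split => // P GP.
    have := H P GP; rewrite quadp_eval mul1r; lra.
  + move=> H; apply: (proj2 (iii j l jl)); exists (- r); split; first by rewrite oppr_eq0.
    move=> P GP; have := H P GP; rewrite quadp_eval mul1r; lra.
- apply: XX => P GP; have := keyc P GP => h.
  have : (hX (P j) * hX (P l)) ^+ 2 <= 0.
    rewrite h; apply: mulr_le0_ge0 => //; exact: sqr_ge0.
  have := sqr_ge0 (hX (P j) * hX (P l)) => h1 h2.
  by apply/eqP; rewrite -sqrf_eq0 eq_le h2 h1.
Qed.

Lemma curve_main (G : ptset R m) a b e j l : real_EPBQ_curve G a b e -> j != l ->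
  (1 - a j l * e j l - b j l * b l j) ^+ 2
     - 4 * (- (a j l * b j l)) * (- (b l j * e j l)) <= 0 ->
  (- (a j l * b j l) < 0) \/
  (- (a j l * b j l) = 0 /\ 1 - a j l * e j l - b j l * b l j = 0 /\
   - (b l j * e j l) < 0) -> False.
Proof.
move=> hC jl hD; have hC' := hC; case: hC' => [[irr _ _] rel ii iii].
have hF : forall P, G P -> Frel (a j l) (b j l) (b l j) (e j l)
   (hX (P j)) (hY (P j)) (hX (P l)) (hY (P l)) = 0.
  by move=> P GP; exact: (rel j l jl P GP).
set al := - (a j l * b j l) in hD *; set be := 1 - a j l * e j l - b j l * b l j in hD *.
case=> [hal|[hal0 [hbe hga]]]; last first.
  have := @Ysplit G j l irr; case.
  - move=> P GP; have /eqP := @alg2 _ _ _ _ _ _ _ _ (hF P GP) hal0 hbe hga.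
    by rewrite mulf_eq0 => /orP[/eqP|/eqP]; [left|right].
  - exact: (@noY G a b e j hC).
  - exact: (@noY G a b e l hC).
have per := fun P GP => @alg1 _ _ _ _ _ _ _ _ (hF P GP) hal hD.
have := @union_split G _ _ irr (quadp_mh j j (2 * al) be) (quadp_mh l l 0 1); case.
- move=> P GP; rewrite !quadp_eval mul0r add0r mul1r.
  have [_ /eqP] := per P GP; rewrite mulf_eq0 => /orP[/eqP ->|/eqP ->]; [left|right] => //.
  by rewrite mul0r.
- move=> HS.
  have Hu : forall P, G P -> exists u, P j = Some u /\ 2 * al * u ^+ 2 + be = 0.
    move=> P GP; have := HS P GP; rewrite quadp_eval.
    case: (P j) => [u|] /=.
      by rewrite !mulr1 -expr2 => h; exists u.
    rewrite mulr1 mul0r mulr0 addr0 => h; exfalso; have : al = 0 by lra.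
    by move/eqP; rewrite (negbTE (ltr0_neq0 hal)).
  have [[P0 [GP0 nP0]] _] := ii j.
  have [u0 [E0 hu0]] := Hu P0 GP0.
  have u00 : u0 != 0 by apply: contraNneq nP0 => u00; rewrite E0 u00.
  have usq : forall P, G P -> exists u, P j = Some u /\ u ^+ 2 = u0 ^+ 2.
    move=> P GP; have [u [E hu]] := Hu P GP; exists u; split => //.
    have : 2 * al * (u ^+ 2 - u0 ^+ 2) = 0 by rewrite mulrBr; lra.
    move/eqP; rewrite mulf_eq0 mulf_eq0 pnatr_eq0 (negbTE (ltr0_neq0 hal)) /= subr_eq0.
    by move/eqP.
  set Ms := a j l * u0 ^+ 2 + b l j.
  have T1 : forall P, G P -> exists u, P j = Some u /\ u != 0 /\
       Ms * hX (P l) - u * hY (P l) = 0.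
    move=> P GP; have [u [E hu]] := usq P GP; exists u; split => //; split.
      by apply/eqP => u0e; move: u00; rewrite -sqrf_eq0 -hu u0e expr0n /= eqxx.
    have [h1 _] := per P GP; move: h1; rewrite E /= /Ms -hu.
    by rewrite !expr1n !mulr1.
  have [Ms0|Ms0] := eqVneq Ms 0.
    apply: (@noY G a b e l hC) => P GP.
    have [u [E [u0' h]]] := T1 P GP; move: h; rewrite Ms0 mul0r sub0r => /eqP.
    by rewrite oppr_eq0 mulf_eq0 (negbTE u0') /= => /eqP.
  apply: (proj1 (iii j l jl)); exists Ms; split => // P GP.
  have [u [E [u0' h]]] := T1 P GP; rewrite E /=; lra.
- move=> H; apply: (@noY G a b e l hC) => P GP.
  by have := H P GP; rewrite quadp_eval mul0r add0r mul1r => /sqz.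
Qed.
Lemma alg3 (a b b' e s t : R) : 0 < s -> 0 < t ->
  (- a + t * b + s * b' - s * t * e) ^+ 2 < 4 * s * t ->
  (1 - a * e - b * b') ^+ 2 - 4 * (- (a * b)) * (- (b' * e)) <= 0 ->
  (- (a * b) < 0) \/
  (- (a * b) = 0 /\ 1 - a * e - b * b' = 0 /\ - (b' * e) < 0).
Proof.
move=> s0 t0 hL hD.
set al := - (a * b); set be := 1 - a * e - b * b'; set ga := - (b' * e).
set D := be ^+ 2 - 4 * al * ga in hD.
set A1 := s * b' - a; set B1 := b - s * e.
have eL : - a + t * b + s * b' - s * t * e = A1 + B1 * t by rewrite /A1 /B1; ring.
rewrite eL in hL.
have h1 : 4 * (A1 * B1) * t < 4 * s * t.
  have := sqr_ge0 (A1 - B1 * t).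
  have -> : (A1 - B1 * t) ^+ 2 = (A1 + B1 * t) ^+ 2 - 4 * (A1 * B1) * t by ring.
  lra.
have h2 : A1 * B1 < s.
  have t4 : 0 < 4 * t by rewrite mulr_gt0.
  have : (A1 * B1) * (4 * t) < s * (4 * t).
    by move: h1; rewrite !mulrA (mulrC (A1 * B1)) (mulrC s) !mulrA.
  by rewrite ltr_pM2r.
set Ps := s - A1 * B1.
have Ppos : 0 < Ps by rewrite subr_gt0.
have id : - 4 * al * Ps = (be * s - 2 * al) ^+ 2 - D * s ^+ 2.
  by rewrite /Ps /A1 /B1 /D /al /be /ga; ring.
have [alneg|alpos|al0] := ltgtP al 0.
- by left.
- exfalso.
  have : 0 <= (be * s - 2 * al) ^+ 2 - D * s ^+ 2.
    have := sqr_ge0 (be * s - 2 * al); have := sqr_ge0 s; nra.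
  rewrite -id; have : 0 < al * Ps by rewrite mulr_gt0.
  nra.
- right; split => //.
  have hbe2 : be ^+ 2 <= 0 by move: hD; rewrite /D al0 mulr0 mul0r subr0.
  have be0 : be = 0.
    by apply/eqP; rewrite -sqrf_eq0 eq_le hbe2 sqr_ge0.
  split => //.
  move: Ppos; rewrite /Ps /A1 /B1.
  have : be = 0 by [].
  rewrite /be /ga => hb.
  have : 0 < s ^+ 2 by rewrite exprn_gt0.
  move: al0; rewrite /al => ha.
  nra.
Qed.
End Aux.

Theorem mainTheorem8 (R : realType) (m : nat) (Gamma : ptset R m)
    (a b e : 'I_m -> 'I_m -> R) :
  real_EPBQ_curve Gamma a b e ->
  realisable a b e ->
  forall j l : 'I_m, j != l ->
    0 < (1 - a j l * e j l - b j l * b l j) ^+ 2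
        - 4 * a j l * b j l * b l j * e j l.
Proof.
move=> hC hR j l jl.
have [ea ee] := @sym_ae R m Gamma a b e j l hC jl.
have [x [y [x0 y0 hL]]] := @mat_part R m a b e j l jl ea ee hR.
rewrite ltNge; apply/negP => hD.
have eD : (1 - a j l * e j l - b j l * b l j) ^+ 2
     - 4 * (- (a j l * b j l)) * (- (b l j * e j l)) =
   (1 - a j l * e j l - b j l * b l j) ^+ 2 - 4 * a j l * b j l * b l j * e j l.
  by ring.
have hD' := hD; rewrite -eD in hD'.
apply: (@curve_main R m Gamma a b e j l hC jl hD').
apply: (@alg3 R _ _ _ _ (x ^+ 2) (y ^+ 2)) => //.
- by rewrite exprn_even_gt0.
- by rewrite exprn_even_gt0.
Qed.
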